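(* Let $G=(V,E)$ be a temporal network, let $\pi$ be an ordering of $V$, and let $\delta\ge 0$. Let $e=(u,v,t)\in E$ be a temporal edge with $\pi(u)<\pi(v)$, and let $w\in N^{+}_{\pi}(u)$ be a vertex adjacent to $v$ in $G_S$. Put $L_2=E_{u,w}$ and $L_3=E_{v,w}$. Let $L_{12}[e]$ be the first edge of $L_2$ (in sorted order) whose timestamp is at least $t(e)$, and for $f\in L_2$ let $L_{23}[f]$ be the first edge of $L_3$ whose timestamp is at least $t(f)$. Then $e$ forms at least one $\delta$-temporal triangle with $w$ if and only if $L_{12}[e]$ and $L_{23}[L_{12}[e]]$ exist and $$t(e)\le t(L_{12}[e])\le t(L_{23}[L_{12}[e]])\le t(e)+\delta.$$
   Context: A temporal network $G=(V,E)$ is a finite multiset of temporal edges $(x,y,t)$ with $x\neq y\in V$ and timestamp $t=t(e)\in\mathbb{R}$; the edge goes from $x$ to $y$, and parallel edges (in both directions) are allowed. For distinct $x,y\in V$, $E_{x,y}$ denotes the list of temporal edges from $x$ to $y$, sorted by increasing timestamp. $G_S$ is the underlying static graph: the simple undirected graph on $V$ with $\{x,y\}$ an edge iff there is at least one temporal edge between $x$ and $y$ (in either direction); $N(x)$ is the neighbourhood of $x$ in $G_S$. For an ordering $\pi$ of $V$, $N^{+}_{\pi}(x)=\{y\in N(x):\pi(x)<\pi(y)\}$. For $\delta\ge 0$, a temporal edge $e=(a,b,t)$ forms a $\delta$-temporal triangle with a vertex $c$ if there exist temporal edges $(a,c,t_2)$ and $(b,c,t_3)$ in $E$ with $t\le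 t_2\le t_3\le t+\delta$. *)

(* Defs.v *)
From HB Require Import structures.
From mathcomp Require Import all_boot all_order all_algebra.
Set Implicit Arguments. Unset Strict Implicit. Unset Printing Implicit Defensive.
Import Order.TTheory GRing.Theory Num.Theory.
Local Open Scope ring_scope.

Section Temporal.
Variables (V : finType) (R : realFieldType).

Definition tedge := (V * V * R)%type.
Definition tsrc (e : tedge) : V := e.1.1.
Definition tdst (e : tedge) : V := e.1.2.
Definition ttime (e : tedge) : R := e.2.

Definition temporal_network (E : seq tedge) : Prop :=
  forall e, e \in E -> tsrc e != tdst e.

Definition Exy (E : seq tedge) (x y : V) : seq tedge :=
  sort (fun a b : tedge => ttime a <= ttime b)
       [seq f <- E | (tsrc f == x) && (tdst f == y)].

Definition adjS (E : seq tedge) (x y : V) : bool :=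
  (x != y) &&
  has (fun f : tedge => ((tsrc f == x) && (tdst f == y)) ||
                        ((tsrc f == y) && (tdst f == x))) E.

Definition ordering (pi : V -> nat) : Prop := injective pi.

Definition Nplus (E : seq tedge) (pi : V -> nat) (x y : V) : bool :=
  adjS E x y && (pi x < pi y)%N.

Definition first_ge (L : seq tedge) (t : R) : option tedge :=
  ohead [seq f <- L | t <= ttime f].

Definition forms_triangle (E : seq tedge) (delta : R) (e : tedge) (c : V) : Prop :=
  exists t2 t3 : R,
    (tsrc e, c, t2) \in E /\ (tdst e, c, t3) \in E /\
    ttime e <= t2 /\ t2 <= t3 /\ t3 <= ttime e + delta.

End Temporal.

(* Main.v *)
Require Import Defs.
From HB Require Import structures.
From mathcomp Require Import all_boot all_order all_algebra.
Import Order.TTheory GRing.Theory Num.Theory.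
Local Open Scope ring_scope.

Section H.
Variables (V : finType) (R : realFieldType).

Let leT := (fun a b : tedge V R => ttime a <= ttime b).

Lemma leT_trans : transitive leT.
Proof. by move=> a b c; rewrite /leT; apply: le_trans. Qed.

Lemma leT_total : total leT.
Proof. by move=> a b; rewrite /leT le_total. Qed.

Lemma Exy_sorted E x y : sorted leT (Exy E x y).
Proof. exact: (sort_sorted leT_total). Qed.

Lemma mem_Exy E x y (f : tedge V R) : (f \in Exy E x y) = (f \in E) && ((tsrc f == x) && (tdst f == y)).
Proof. by rewrite /Exy mem_sort mem_filter andbC. Qed.

Lemma first_ge_spec (L : seq (tedge V R)) t x : sorted leT L -> x \in L -> t <= ttime x ->
  exists f, first_ge L t = Some f /\ f \in L /\ t <= ttime f /\ ttime f <= ttime x.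
Proof.
move=> sL xL tx; rewrite /first_ge.
have sF : sorted leT [seq f <- L | t <= ttime f] by apply: sorted_filter => //; exact: leT_trans.
have xF : x \in [seq f <- L | t <= ttime f] by rewrite mem_filter tx xL.
move: sF xF (mem_filter (fun f => t <= ttime f) ^~ L).
case: [seq f <- L | t <= ttime f] => [//|f s] /= sF xF memF.
exists f; split => //.
have := memF f; rewrite inE eqxx /= => /esym/andP[tf fL]; split => //; split => //.
move: xF; rewrite inE => /orP[/eqP->//|xs].
have := order_path_min (@leT_trans) sF => /allP; apply => //.
Qed.

End H.

Theorem theorem3p1 (V : finType) (R : realFieldType) (E : seq (tedge V R))
  (pi : V -> nat) (delta : R) (e : tedge V R) (w : V) :
  temporal_network E -> ordering pi -> 0 <= delta ->
  e \in E -> (pi (tsrc e) < pi (tdst e))%N ->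
  Nplus E pi (tsrc e) w -> adjS E (tdst e) w ->
  forms_triangle E delta e w <->
  (exists f g : tedge V R,
     first_ge (Exy E (tsrc e) w) (ttime e) = Some f /\
     first_ge (Exy E (tdst e) w) (ttime f) = Some g /\
     ttime e <= ttime f /\ ttime f <= ttime g /\ ttime g <= ttime e + delta).
Proof.
move=> _ _ _ _ _ _ _; split.
- move=> [t2 [t3 [h2 [h3 [e2 [e23 e3]]]]]].
  have m2 : (tsrc e, w, t2) \in Exy E (tsrc e) w by rewrite mem_Exy h2 /tsrc /tdst /= !eqxx.
  have m3 : (tdst e, w, t3) \in Exy E (tdst e) w by rewrite mem_Exy h3 /tsrc /tdst /= !eqxx.
  have [f [Hf [_ [ef f2]]]] := @first_ge_spec V R _ _ _ (@Exy_sorted V R E (tsrc e) w) m2 e2.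
  have f3 : ttime f <= ttime (tdst e, w, t3) by apply: le_trans f2 e23.
  have [g [Hg [_ [fg g3]]]] := @first_ge_spec V R _ _ _ (@Exy_sorted V R E (tdst e) w) m3 f3.
  exists f, g; do !split => //; exact: le_trans g3 e3.
- move=> [f [g [Hf [Hg [ef [fg ge]]]]]].
  have fin : forall (L : seq (tedge V R)) t (h : tedge V R), first_ge L t = Some h -> h \in L.
    move=> L t h; rewrite /first_ge.
    case E1: [seq f0 <- L | t <= ttime f0] => [//|a s] /= [<-].
    have : a \in [seq f0 <- L | t <= ttime f0] by rewrite E1 inE eqxx.
    by rewrite mem_filter => /andP[].
  move: (fin _ _ _ Hf) (fin _ _ _ Hg); rewrite !mem_Exy.
  move=> /andP[fE /andP[/eqP sf /eqP df]] /andP[gE /andP[/eqP sg /eqP dg]].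
  exists (ttime f), (ttime g); split; last split => //.
  + by move: fE sf df; clear Hf Hg ef fg; case: f => [[a b] c] /=; rewrite /tsrc /tdst /= => H <- <-.
  + by move: gE sg dg; clear Hg fg ge; case: g => [[a b] c] /=; rewrite /tsrc /tdst /= => H <- <-.
Qed.
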